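(* Let $\Gamma=(V,E)$ be a $2$-connected finite graph and let $$Z_\Gamma(q,v)=\sum_{A\subseteq E}q^{k(A)}v^{|A|},$$ where $k(A)$ is the number of connected components (including isolated vertices) of the spanning subgraph $(V,A)$. Write $Z_\Gamma(q,v)=q\,\widetilde Z_\Gamma(q,v)$ in $\mathbb{C}[q,v]$. Then $\widetilde Z_\Gamma(q,v)$ is irreducible in $\mathbb{C}[q,v]$. The same holds in the variables $(q,y)$ with $y=v+1$.
   Context: A graph is $2$-connected if it has at least three vertices and no vertex whose removal disconnects it. $Z_\Gamma$ is the partition function of the $q$-state Potts model in the Fortuin–Kasteleyn representation; it is divisible by $q$ since $k(A)\ge1$ for all $A$. *)

(* Defs.v *)
From HB Require Import structures.
From mathcomp Require Import all_boot all_order all_algebra.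
From mathcomp Require Import complex.
From mathcomp Require Import reals.
Set Implicit Arguments. Unset Strict Implicit. Unset Printing Implicit Defensive.
Import Order.TTheory GRing.Theory Num.Theory.
Local Open Scope ring_scope.

Definition simple_graph (V : finType) (e : rel V) : Prop :=
  irreflexive e /\ symmetric e.

Definition edges (V : finType) (e : rel V) : {set {set V}} :=
  [set [set p.1; p.2] | p : V * V & e p.1 p.2].

Definition sub_rel (V : finType) (A : {set {set V}}) : rel V :=
  fun x y => [set x; y] \in A.

Definition ncomp (V : finType) (A : {set {set V}}) : nat :=
  n_comp (sub_rel A) [pred x : V | true].

Definition two_connected (V : finType) (e : rel V) : Prop :=
  [/\ (3 <= #|V|)%N,
      (forall x y : V, connect e x y) &
      (forall w x y : V, x != w -> y != w ->
         connect (fun a b => [&& a != w, b != w & e a b]) x y)].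

(* The multivariate (FK) Potts partition function in C[q,v], with
   C = complex R for a real field R : realType; represented in
   {poly {poly C}} with q := 'X (outer variable) and v := 'X%:P. *)
Definition Zpotts (R : realType) (V : finType) (e : rel V)
  : {poly {poly R[i]}} :=
  \sum_(A : {set {set V}} | A \subset edges e)
     'X ^+ ncomp A * ('X%:P) ^+ #|A|.

(* The same in the variables (q, y), y = v + 1, i.e. v = y - 1. *)
Definition Zpotts_y (R : realType) (V : finType) (e : rel V)
  : {poly {poly R[i]}} :=
  \sum_(A : {set {set V}} | A \subset edges e)
     'X ^+ ncomp A * ('X%:P - 1) ^+ #|A|.

Definition irreducible_elt (D : idomainType) (p : D) : Prop :=
  [/\ p != 0, p \isn't a GRing.unit &
      forall a b : D, p = a * b -> a \is a GRing.unit \/ b \is a GRing.unit].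

(* Main.v *)
Require Import Defs.
From HB Require Import structures.
From mathcomp Require Import all_boot all_order all_algebra.
From mathcomp Require Import complex.
From mathcomp Require Import reals.
From mathcomp Require Import ring.
Import Order.TTheory GRing.Theory Num.Theory.
Local Open Scope ring_scope.

Set Implicit Arguments. Unset Strict Implicit. Unset Printing Implicit Defensive.

Local Close Scope ring_scope.


Section Comb.
Variable V : finType.
Implicit Types (A B C F K P : {set {set V}}).

Definition conn A := connect (sub_rel A).

Lemma sub_rel_sym A : symmetric (sub_rel A).
Proof. by move=> x y; rewrite /sub_rel setUC. Qed.

Lemma conn_sym A : connect_sym (sub_rel A).
Proof. exact: sym_connect_sym (sub_rel_sym A). Qed.

Lemma connS A x y : conn A x y = conn A y x.
Proof. exact: conn_sym. Qed.

Lemma conn_trans A x y z : conn A x y -> conn A y z -> conn A x z.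
Proof. exact: connect_trans. Qed.

Lemma connect_ind_pred (r : rel V) (Q : pred V) a b :
  Q a -> (forall c d, r c d -> Q c -> Q d) -> connect r a b -> Q b.
Proof.
move=> Qa st /connectP[p pp ->]; elim: p a Qa pp => //= c p IH a Qa /andP[rac pp].
exact: IH (st _ _ rac Qa) pp.
Qed.

Lemma conn_mono A B x y : A \subset B -> conn A x y -> conn B x y.
Proof.
move=> AB; apply: connect_sub => c d rcd; apply: connect1.
by rewrite /sub_rel (subsetP AB).
Qed.

Lemma conn_edge A a b : [set a; b] \in A -> conn A a b.
Proof. by move=> h; apply: connect1. Qed.

Lemma set2_eqP (x y a b : V) : [set x; y] = [set a; b] ->
  (x = a /\ y = b) \/ (x = b /\ y = a).
Proof.
move=> E.
have xi : x \in [set a; b] by rewrite -E set21.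
have yi : y \in [set a; b] by rewrite -E set22.
have ai : a \in [set x; y] by rewrite E set21.
have bi : b \in [set x; y] by rewrite E set22.
case/set2P: xi => ?; case/set2P: yi => ?; subst; auto.
- by move: bi; rewrite in_set2 orbb => /eqP ->; left.
- by move: ai; rewrite in_set2 orbb => /eqP ->; left.
Qed.

Lemma sub_relU1 A a b x y :
  sub_rel ([set a; b] |: A) x y = ([set x; y] == [set a; b]) || sub_rel A x y.
Proof. by rewrite /sub_rel in_setU1. Qed.

Lemma conn_addE A a b : conn A a b -> conn ([set a; b] |: A) =2 conn A.
Proof.
move=> H x y; apply/idP/idP; last by apply: conn_mono; apply: subsetUr.
apply: connect_sub => c d; rewrite sub_relU1 => /orP[/eqP/set2_eqP[[-> ->]|[-> ->]]|].
- exact: H.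
- by rewrite -/(conn A _ _) connS.
- exact: connect1.
Qed.

Lemma conn_split A a b x y : conn ([set a; b] |: A) x y ->
  [|| conn A x y, conn A x a && conn A b y | conn A x b && conn A a y].
Proof.
move=> Hxy; apply: (connect_ind_pred (Q := fun w =>
  [|| conn A x w, conn A x a && conn A b w | conn A x b && conn A a w]) _ _ Hxy); first by rewrite /conn connect0.
move=> c d; rewrite sub_relU1 => /orP[/eqP/set2_eqP[[-> ->]|[-> ->]]|rcd].
- case/or3P => [->|/andP[-> _]|/andP[H1 H2]].
  + by rewrite /conn connect0 orbT.
  + by rewrite /conn connect0 orbT.
  + by rewrite H1.
- case/or3P => [->|/andP[H1 H2]|/andP[H1 H2]].
  + by rewrite /conn connect0 !orbT.
  + by rewrite H1.
  + by rewrite (conn_trans H1) // connS.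
- have Hcd : conn A c d by apply: connect1.
  case/or3P => [H1|/andP[H1 H2]|/andP[H1 H2]].
  + by rewrite (conn_trans H1 Hcd).
  + by rewrite H1 (conn_trans H2 Hcd) orbT.
  + by rewrite H1 (conn_trans H2 Hcd) !orbT.
Qed.

Lemma conn_iso A z w : z \notin cover A -> conn A z w -> z = w.
Proof.
move=> zA /connectP[[|c p] //= /andP[rzc _] _].
case/negP: zA; apply/bigcupP; exists [set z; c] => //; exact: set21.
Qed.

Lemma conn_iso' A z w : z \notin cover A -> conn A w z -> w = z.
Proof. by move=> zA; rewrite connS => /(conn_iso zA) ->. Qed.

Lemma conn0 x y : conn set0 x y = (x == y).
Proof.
apply/idP/eqP => [|->]; last exact: connect0.
apply: conn_iso; apply/bigcupP => -[B]; by rewrite inE.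
Qed.

Lemma ncomp_add A a b : ncomp A = ncomp ([set a; b] |: A) + ~~ conn A a b.
Proof.
set A' := [set a; b] |: A.
set r := sub_rel A; set r' := sub_rel A'.
set cl := closure r (pred2 a b).
have symr := conn_sym A; have symr' := conn_sym A'.
have nT D : ncomp D = n_comp (sub_rel D) V.
  by apply: eq_n_comp_r => x; rewrite !inE.
rewrite !nT !(n_compC cl).
have -> : n_comp r cl = (~~ connect r a b).+1 by apply: n_comp_closure2.
have clE : cl =i connect r' a.
  move=> w; apply/idP/idP.
  - move=> /pred0Pn[t /andP[/= wt]]; rewrite /= inE => tab.
    have wt' : connect r' w t by apply: conn_mono wt; apply: subsetUr.
    have at' : connect r' a t.
      case/orP: tab => /eqP ->; first exact: connect0.
      by apply: connect1; rewrite /r' sub_relU1 eqxx.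
    by apply: (connect_trans at'); rewrite symr'.
  - move=> H; apply: (connect_ind_pred (Q := fun w => w \in cl) _ _ H); first by apply: mem_closure; rewrite !inE eqxx.
    move=> c d; rewrite /r' sub_relU1 => /orP[/eqP/set2_eqP[[_ ->]|[_ ->]]|rcd] cin.
    + by apply: mem_closure; rewrite !inE eqxx orbT.
    + by apply: mem_closure; rewrite !inE eqxx.
    + by rewrite -(closure_closed symr (pred2 a b) rcd).
have -> : n_comp r' cl = 1.
  by rewrite (eq_n_comp_r clE) n_comp_connect.
have -> : n_comp r' [predC cl] = n_comp r [predC cl].
  apply: eq_card => z; rewrite !inE /=.
  case zcl: (z \in cl); rewrite ?andbF // !andbT.
  have E : connect r' z =1 connect r z.
    move=> w; apply/idP/idP; last by apply: conn_mono; apply: subsetUr.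
    move=> H; apply: (connect_ind_pred (Q := connect r z) _ _ H); first exact: connect0.
    move=> c d; rewrite /r' sub_relU1 => /orP[/eqP/set2_eqP[[-> _]|[-> _]]|rcd] zc.
    + by move/negbT: zcl; case/negP; apply/pred0Pn; exists a; rewrite /= !inE zc eqxx.
    + by move/negbT: zcl; case/negP; apply/pred0Pn; exists b; rewrite /= !inE zc eqxx orbT.
    + exact: connect_trans zc (connect1 rcd).
  by rewrite /roots /fingraph.root (eq_pick E).
by rewrite /conn -/r addSn add1n addSn addnC.
Qed.

End Comb.

Local Open Scope ring_scope.

Lemma sum_split (T : finType) (M : nmodType) (S : {set T}) g (w : {set T} -> M) :
  g \in S -> \sum_(A : {set T} | A \subset S) w A = \sum_(A : {set T} | A \subset S :\ g) (w A + w (g |: A)).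
Proof.
move=> gS; rewrite big_split /= [LHS](bigID (fun A : {set T} => g \in A)) /= addrC; congr (_ + _).
  by apply: eq_bigl => A; rewrite subsetD1.
rewrite (reindex_onto (fun A => g |: A) (fun A => A :\ g)) /=; last first.
  by move=> A /andP[_ gA]; rewrite setD1K.
apply: eq_bigl => A; rewrite subsetD1 subUset sub1set gS setU11 /=.
case gA: (g \in A) => /=.
  rewrite !andbF; apply/negbTE; apply/negP => /andP[_ /eqP E].
  by move: gA; rewrite -E setD11.
by rewrite setU1K ?gA // eqxx !andbT.
Qed.

Lemma sum_subset0 (T : finType) (M : nmodType) (w : {set T} -> M) :
  \sum_(A : {set T} | A \subset set0) w A = w set0.
Proof.
rewrite (eq_bigl (pred1 set0)) ?big_pred1_eq // => A.
by rewrite subset0.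
Qed.

Lemma sum_toggle (T : finType) (S : {set T}) g (f : {set T} -> int) :
  g \in S -> (forall A : {set T}, A \subset S :\ g -> f (g |: A) = f A) ->
  \sum_(A : {set T} | A \subset S) (-1) ^+ #|A| * f A = 0.
Proof.
move=> gS H; rewrite (sum_split _ gS); apply: big1 => A AS.
rewrite H // cardsU1.
have -> : g \notin A by move: AS; rewrite subsetD1 => /andP[].
by rewrite add1n exprS mulN1r mulNr addrN.
Qed.

Lemma sum_binom (T : finType) (R : comNzRingType) (S : {set T}) (x : R) :
  \sum_(A : {set T} | A \subset S) x ^+ #|A| = (x + 1) ^+ #|S|.
Proof.
move: {2}#|S| (erefl #|S|) => n; elim: n S => [|n IH] S cS.
  move/eqP: cS; rewrite cards_eq0 => /eqP ->.
  by rewrite sum_subset0 cards0 !expr0.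
have [g gS] : exists g, g \in S.
  by apply/set0Pn; rewrite -cards_eq0 cS.
rewrite (sum_split _ gS).
have cS' : #|S :\ g| = n by move: cS; rewrite (cardsD1 g) gS add1n => -[].
under eq_bigr => A AS.
  rewrite cardsU1.
  have -> : g \notin A by move: AS; rewrite subsetD1 => /andP[].
  rewrite add1n exprS -[x ^+ _ as X in X + _]mul1r -mulrDl addrC.
  over.
by rewrite -mulr_sumr IH // cS exprS cS'.
Qed.

Section Psi.
Variable V : finType.
Variables u v : V.
Implicit Types (A B C F K P : {set {set V}}).

Definition ee := [set u; v].

Definition Phi C F : int :=
  \sum_(A : {set {set V}} | A \subset F :\ ee) (-1) ^+ #|A| * (~~ conn (A :|: C) u v)%:R.

Definition Psi C F : int := (-1) ^+ (ncomp C + ncomp (C :|: F)).+1 * Phi C F.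

Definition pairs F := forall f, f \in F -> exists x y, f = [set x; y] :> {set V}.

Lemma Phi_rec C F g : g \in F -> g != ee ->
  Phi C F = Phi C (F :\ g) - Phi (g |: C) (F :\ g).
Proof.
move=> gF ge; have gF' : g \in F :\ ee by rewrite in_setD1 ge.
rewrite /Phi (sum_split _ gF').
have -> : (F :\ ee) :\ g = (F :\ g) :\ ee.
  by apply/setP => f; rewrite !in_setD1 andbCA.
rewrite -sumrB; apply: eq_bigr => A AS.
have gA : g \notin A by move: AS; rewrite !subsetD1 => /andP[/andP[]].
rewrite cardsU1 gA add1n exprS mulN1r mulNr -setUA setUCA.
by rewrite [in X in _ - X]setUCA.
Qed.

Lemma pairs_sub F F' : F' \subset F -> pairs F -> pairs F'.
Proof. by move=> sub pF f /(subsetP sub) /pF. Qed.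

Lemma Psi_rec C F x y : let g := [set x; y] in
  g \in F -> g != ee -> ~~ conn C x y -> conn ((C :|: F) :\ g) x y ->
  Psi C F = Psi C (F :\ g) + Psi (g |: C) (F :\ g).
Proof.
move=> g gF ge nc cc.
have gC : g \notin C by apply: contra nc => gC; apply: conn_edge.
have E1 : C :|: (F :\ g) = (C :|: F) :\ g.
  apply/setP => f; rewrite !inE; case: (f =P g) => [->|] //=.
  by rewrite (negbTE gC).
have E2 : (g |: C) :|: (F :\ g) = C :|: F.
  apply/setP => f; rewrite !inE; case: (f =P g) => [->|] //=.
  by rewrite gF orbT.
have kC : ncomp C = (ncomp (g |: C)).+1 by rewrite (ncomp_add C x y) nc addn1.
have kCF : ncomp (C :|: F) = ncomp (C :|: (F :\ g)).
  rewrite E1 {1}(_ : C :|: F = g |: ((C :|: F) :\ g)); last first.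
    by rewrite setD1K // inE gF orbT.
  by rewrite (ncomp_add ((C :|: F) :\ g) x y) cc addn0.
rewrite /Psi (Phi_rec C gF ge) E2 -kCF kC addSn exprS.
set s := (-1) ^+ _; by rewrite mulrBr !mulN1r !mulNr opprK.
Qed.

Lemma Psi_single C : ~~ conn C u v -> Psi C [set ee] = 1.
Proof.
move=> nc; rewrite /Psi /Phi.
have -> : [set ee] :\ ee = set0 by apply/setP=> f; rewrite !inE andNb.
rewrite sum_subset0 set0U nc cards0 expr0 mul1r mulr1.
rewrite (ncomp_add C u v) nc setUC addn1 addSn -addnS.
rewrite /ee; set k := ncomp _; by rewrite addnS -signr_odd /= negbK addnn odd_double.
Qed.

Lemma Phi0 C F : conn C u v -> Phi C F = 0.
Proof.
move=> c; apply: big1 => A _.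
by rewrite (conn_mono (subsetUr A C) c) mulr0.
Qed.

Lemma minB C : ~~ conn C u v -> forall n B, (#|B| <= n)%N -> pairs B ->
  conn (C :|: B) u v -> exists g x y, [/\ g \in B, g = [set x; y] &
    conn (ee |: (C :|: (B :\ g))) x y].
Proof.
move=> nc; elim=> [|n IH] B cB pB cCB.
  move: cB; rewrite leqn0 cards_eq0 => /eqP B0.
  by move: cCB; rewrite B0 setU0 (negbTE nc).
have [B0|[g gB]] := set_0Vmem B.
  by move: cCB; rewrite B0 setU0 (negbTE nc).
have [x [y gxy]] := pB g gB.
case c': (conn (C :|: (B :\ g)) u v).
  have cB' : (#|B :\ g| <= n)%N by move: cB; rewrite (cardsD1 g) gB add1n.
  have [g' [x' [y' [g'B g'xy cg']]]] :=
    IH (B :\ g) cB' (pairs_sub (subD1set B g) pB) c'.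
  exists g', x', y'; split => //; first by move: g'B; rewrite in_setD1 => /andP[].
  apply: conn_mono cg'; apply: setUS; apply: setUS.
  apply/subsetP => f; rewrite !in_setD1 => /andP[-> /andP[_ ->]]; by [].
exists g, x, y; split => //.
have E : C :|: B = [set x; y] |: (C :|: (B :\ g)).
  by rewrite -gxy setUCA setD1K.
move: cCB; rewrite E => /conn_split /or3P[|/andP[h1 h2]|/andP[h1 h2]].
- by rewrite c'.
- have m : C :|: (B :\ g) \subset ee |: (C :|: (B :\ g)) by apply: subsetUr.
  apply: (conn_trans (y := u)); first by rewrite connS; exact: (conn_mono m h1).
  apply: (conn_trans (y := v)); first by apply: conn_edge; rewrite setU11.
  by rewrite connS; exact: (conn_mono m h2).
- have m : C :|: (B :\ g) \subset ee |: (C :|: (B :\ g)) by apply: subsetUr.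
  apply: (conn_trans (y := v)); first exact: (conn_mono m h2).
  apply: (conn_trans (y := u)); first by rewrite connS; apply: conn_edge; rewrite setU11.
  exact: (conn_mono m h1).
Qed.

End Psi.

Section N.
Variable V : finType.
Variables u v : V.
Implicit Types (A B C F K P : {set {set V}}).
Local Notation ee := (ee u v).
Local Notation Phi := (Phi u v).
Local Notation Psi := (Psi u v).

Lemma Psi_ge0 n C F : (#|F| <= n)%N -> ee \in F -> pairs F -> 0 <= Psi C F.
Proof.
elim: n C F => [|n IH] C F cF eF pF.
  by move: cF; rewrite leqn0 cards_eq0 => /eqP F0; move: eF; rewrite F0 inE.
have Psi0 : Phi C F = 0 -> Psi C F = 0 by rewrite /Psi => ->; rewrite mulr0.
case cuv: (conn C u v).
  by rewrite Psi0 // Phi0.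
have eC : ee \notin C by apply/negP => /conn_edge; rewrite cuv.
case: (boolP [exists g in F :\ ee, [exists x, [exists y,
          (g == [set x; y]) && conn C x y]]]).
  case/existsP => g /andP[gF /existsP[x /existsP[y /andP[/eqP gxy cxy]]]].
  rewrite Psi0 // /Phi; apply: (sum_toggle gF) => A AS.
  rewrite -setUA gxy; congr ((~~ _)%:R).
  apply: conn_addE; apply: conn_mono cxy; exact: subsetUr.
move=> noloop.
have nl g x y : g \in F :\ ee -> g = [set x; y] -> ~~ conn C x y.
  move=> gF gxy; apply/negP => cxy; case/negP: noloop.
  by apply/existsP; exists g; rewrite gF; apply/existsP; exists x;
    apply/existsP; exists y; rewrite gxy eqxx cxy.
case: (boolP [exists g in F :\ ee, [exists x, [exists y,
          (g == [set x; y]) && conn ((C :|: F) :\ g) x y]]]).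
  case/existsP => g /andP[gF /existsP[x /existsP[y /andP[/eqP gxy cxy]]]].
  move: gF; rewrite in_setD1 => /andP[ge gF].
  have gF' : g \in F :\ ee by rewrite in_setD1 ge.
  have ncxy := nl _ _ _ gF' gxy.
  subst g; rewrite (Psi_rec gF ge ncxy cxy).
  have cF' : (#|F :\ [set x; y]| <= n)%N.
    by move: cF; rewrite (cardsD1 [set x; y]) gF add1n.
  have eF' : ee \in F :\ [set x; y] by rewrite in_setD1 eq_sym ge.
  have pF' := pairs_sub (subD1set F [set x; y]) pF.
  by rewrite addr_ge0 // IH.
move=> nobridge.
have nb g x y : g \in F :\ ee -> g = [set x; y] -> ~~ conn ((C :|: F) :\ g) x y.
  move=> gF gxy; apply/negP => cxy; case/negP: nobridge.
  by apply/existsP; exists g; rewrite gF; apply/existsP; exists x;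
    apply/existsP; exists y; rewrite {1}gxy eqxx cxy.
case cb: (conn (C :|: (F :\ ee)) u v).
  have [g [x [y [gF gxy cg]]]] := minB (negbT cuv) (leqnn _)
       (pairs_sub (subD1set F ee) pF) cb.
  case/negP: (nb _ _ _ gF gxy); apply: conn_mono cg.
  have gC : g \notin C.
    by apply/negP => gC; case/negP: (nl _ _ _ gF gxy); apply: conn_edge; rewrite -gxy.
  apply/subsetP => f; rewrite !inE; case: (f =P ee) => [->|fe] /=.
    by rewrite eF orbT andbT => _; apply/eqP => E; move: gF; rewrite -E setD11.
  case: (f =P g) => [->|_] /=; first by rewrite (negbTE gC).
  by [].
have [F0|[g0 g0F]] := set_0Vmem (F :\ ee).
  have -> : F = [set ee].
    apply/setP => f; rewrite inE; case: (f =P ee) => [->|/eqP fe]; first by rewrite eF.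
    apply/negbTE/negP => fF.
    have : f \in F :\ ee by rewrite in_setD1 fe fF.
    by rewrite F0 inE.
  by rewrite Psi_single ?cuv.
rewrite Psi0 // /Phi; apply: (sum_toggle g0F) => A AS.
have nc B : B \subset F :\ ee -> ~~ conn (B :|: C) u v.
  move=> BS; apply/negP => c; move: cb; rewrite (conn_mono _ c) //.
  by rewrite setUC; apply: setUS.
have AS' : A \subset F :\ ee by apply: subset_trans AS _; exact: subD1set.
rewrite (negbTE (nc _ AS')) (negbTE (nc (g0 |: A) _)) //.
by rewrite subUset sub1set g0F.
Qed.

End N.

Section Ear.
Variable V : finType.
Variables u v : V.
Implicit Types (A B C F K P : {set {set V}}).
Local Notation ee := (ee u v).
Local Notation Phi := (Phi u v).
Local Notation Psi := (Psi u v).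

Lemma cover_sub A B : A \subset B -> cover A \subset cover B.
Proof.
move=> AB; apply/subsetP => x /bigcupP[f fA xf]; apply/bigcupP; exists f => //.
exact: (subsetP AB).
Qed.

Lemma cover_U1 f A : cover (f |: A) = f :|: cover A.
Proof.
apply/setP => x; rewrite inE; apply/bigcupP/orP.
  by case=> g; rewrite in_setU1 => /orP[/eqP -> ->|gA xg]; [left|right; apply/bigcupP; exists g].
case=> [xf|/bigcupP[g gA xg]]; first by exists f; rewrite ?setU11.
by exists g; rewrite // in_setU1 gA orbT.
Qed.

Lemma notin_cover z A B : z \notin cover B -> A \subset B -> z \notin cover A.
Proof. by move=> zB AB; apply: contra zB; apply: (subsetP (cover_sub AB)). Qed.

Lemma Psi_pendant C F a z : ee \in F -> a \in cover (C :|: F) ->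
  z \notin cover (C :|: F) -> Psi ([set a; z] |: C) F = Psi C F.
Proof.
move=> eF aW zW.
have az : a != z by apply: contraNneq zW => <-.
have vW : v \in cover F by apply/bigcupP; exists ee => //; exact: set22.
have uW : u \in cover F by apply/bigcupP; exists ee => //; exact: set21.
have zF : z \notin cover F by apply: notin_cover zW _; exact: subsetUr.
have zC : z \notin cover C by apply: notin_cover zW _; exact: subsetUl.
have PhiE : Phi ([set a; z] |: C) F = Phi C F.
  apply: eq_bigr => A AS; congr (_ * (~~ _)%:R).
  apply/idP/idP; last by apply: conn_mono; rewrite setUCA; apply: subsetUr.
  have zA : z \notin cover (A :|: C).
    apply: notin_cover zW _; rewrite setUC; apply: setUS.
    by apply: subset_trans AS _; apply: subD1set.
  rewrite setUCA => /conn_split /or3P[//|/andP[_ h]|/andP[h _]].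
  - by move: (conn_iso zA h) => E; move: zF; rewrite E vW.
  - by move: (conn_iso' zA h) => E; move: zF; rewrite -E uW.
have n1 : ~~ conn C a z.
  by apply/negP => /(conn_iso' zC) /eqP; rewrite (negbTE az).
have n2 : ~~ conn (C :|: F) a z.
  by apply/negP => /(conn_iso' zW) /eqP; rewrite (negbTE az).
have k1 : ncomp C = (ncomp ([set a; z] |: C)).+1.
  by rewrite (ncomp_add C a z) n1 addn1.
have k2 : ncomp (C :|: F) = (ncomp ([set a; z] |: C :|: F)).+1.
  by rewrite (ncomp_add (C :|: F) a z) n2 addn1 setUA.
rewrite /Psi PhiE k1 k2 addSn addnS !exprS.
by rewrite !mulN1r opprK.
Qed.

Inductive tail (x0 : V) : {set V} -> V -> V -> {set {set V}} -> Prop :=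
| tail1 (W : {set V}) a y : a != y -> y \in W -> y != x0 -> tail x0 W a y [set [set a; y]]
| tailS (W : {set V}) a z y (P : {set {set V}}) : z \notin W -> z != a -> y \in W ->
    tail x0 (z |: W) z y P -> tail x0 W a y ([set a; z] |: P).

Lemma tail_y x0 W a y P : tail x0 W a y P -> (y \in W) && (y != x0).
Proof.
elim=> {W a y P} [W a y _ -> -> //|W a z y P _ _ yW _ /andP[_ ->]].
by rewrite yW.
Qed.

Lemma tail_pairs x0 W a y P : tail x0 W a y P -> pairs P.
Proof.
elim=> {W a y P} [W a y _ _ _ f|W a z y P _ _ _ _ IH f].
  by rewrite inE => /eqP ->; exists a, y.
by rewrite in_setU1 => /orP[/eqP ->|/IH //]; exists a, z.
Qed.

Lemma tail_edges x0 W b y P : tail x0 W b y P ->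
  forall f, f \in P -> f \subset W -> f = [set b; y].
Proof.
elim=> {W b y P} [W a y _ _ _ f|W a z y P zW _ _ _ IH f].
  by rewrite inE => /eqP ->.
rewrite in_setU1 => /orP[/eqP ->|fP] fW.
  by move: zW; rewrite (subsetP fW) // set22.
have fz := IH f fP (subset_trans fW (subsetUr _ _)).
by move: zW; rewrite (subsetP fW) // fz set21.
Qed.

Lemma tail_conn x0 W b y P : tail x0 W b y P ->
  conn P b y /\ forall w, w \in cover P -> conn P b w.
Proof.
elim=> {W b y P} [W a y _ _ _|W a z y P zW _ _ _ [IH1 IH2]].
  split; first by apply: conn_edge; rewrite inE.
  move=> w; rewrite cover1 => /set2P[->|->]; first exact: connect0.
  by apply: conn_edge; rewrite inE.
have m : P \subset [set a; z] |: P by apply: subsetUr.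
have az : conn ([set a; z] |: P) a z by apply: conn_edge; rewrite setU11.
split; first by apply: conn_trans az (conn_mono m IH1).
move=> w; rewrite cover_U1 in_setU => /orP[|/IH2 h].
  by move/set2P => [->|->] //; apply: connect0.
exact: conn_trans az (conn_mono m h).
Qed.

Lemma Psi_ear x0 W a y P : tail x0 W a y P -> forall C F,
  W = cover (C :|: F) -> a \in W -> ee \in F -> pairs F ->
  ~~ conn C a y -> conn (C :|: F) a y -> Psi C F <= Psi C (F :|: P).
Proof.
elim=> {W a y P} [W a y ay yW yx0|W a z y P zW za yW tl IH] C F WE aW eF pF nc cc.
  set h := [set a; y].
  case hF: (h \in F).
    by rewrite (setUidPl _) // sub1set.
  have hC : h \notin C by apply: contra nc => hC; apply: conn_edge.
  have he : h != ee by apply: contraFneq hF => ->.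
  have hF' : h \in F :|: [set h] by rewrite inE set11 orbT.
  have c' : conn ((C :|: (F :|: [set h])) :\ h) a y.
    apply: conn_mono cc; apply/subsetP => f; rewrite !inE.
    case: (f =P h) => [->|_]; by rewrite ?hF ?(negbTE hC) ?orbF.
  rewrite (Psi_rec hF' he nc c').
  have -> : (F :|: [set h]) :\ h = F.
    by rewrite setUC setU1K ?hF.
  by rewrite lerDl (Psi_ge0 _ (leqnn _)).
set h := [set a; z].
have zW' : z \notin cover (C :|: F) by rewrite -WE.
have zC : z \notin cover C by apply: notin_cover zW' _; exact: subsetUl.
have zF : z \notin cover F by apply: notin_cover zW' _; exact: subsetUr.
have hCF : h \notin C :|: F.
  by apply/negP => hCF; case/negP: zW'; apply/bigcupP; exists h => //; exact: set22.
have hP : h \notin P.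
  apply/negP => hP.
  have hsub : h \subset z |: W.
    by apply/subsetP => w; rewrite !inE => /orP[/eqP ->|/eqP ->]; rewrite ?aW ?eqxx ?orbT.
  case: (set2_eqP (tail_edges tl hP hsub)) => [[az _]|[ay _]].
    by move: za; rewrite az eqxx.
  by move: nc; rewrite ay /conn connect0.
have [cP _] := tail_conn tl.
have pP := tail_pairs tl.
have E1 : F :|: (h |: P) = h |: (F :|: P) by rewrite setUCA.
have he : h != ee.
  by apply/negP => /eqP E; case/negP: zF; apply/bigcupP; exists ee => //; rewrite -E set22.
have hF2 : h \in h |: (F :|: P) by rewrite setU11.
have ncz : ~~ conn C a z.
  by apply/negP => /(conn_iso' zC) E; move: za; rewrite E eqxx.
have cz : conn ((C :|: (h |: (F :|: P))) :\ h) a z.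
  have m1 : C :|: F \subset (C :|: (h |: (F :|: P))) :\ h.
    apply/subsetP => f fCF; rewrite in_setD1 !inE.
    have -> : f != h by apply: contraNneq hCF => <-.
    by move: fCF; rewrite inE => /orP[->|->]; rewrite ?orbT.
  have m2 : P \subset (C :|: (h |: (F :|: P))) :\ h.
    apply/subsetP => f fP; rewrite in_setD1 !inE fP !orbT andbT.
    by apply: contraNneq hP => <-.
  apply: conn_trans (conn_mono m1 cc) _.
  by rewrite connS; apply: conn_mono m2 cP.
rewrite E1 (Psi_rec hF2 he ncz cz) setU1K; last first.
  by rewrite inE negb_or; apply/andP; split => //; apply: contra hCF; rewrite inE => ->; rewrite orbT.
have eF2 : ee \in F :|: P by rewrite inE eF.
have pF2 : pairs (F :|: P).
  by move=> f; rewrite inE => /orP[/pF|/pP].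
have hCF' : h |: C :|: F = h |: (C :|: F) by rewrite setUA.
have IH' : Psi (h |: C) F <= Psi (h |: C) (F :|: P).
  apply: IH => //.
  - by rewrite hCF' cover_U1 -WE; apply/setP => w; rewrite !inE;
      case: (w =P a) => [->|]; rewrite ?aW ?orbT //= orbF.
  - by rewrite setU11.
  - apply/negP => /conn_split /or3P[/(conn_iso zC) E|/andP[/(conn_iso zC) E _]|/andP[_ h']].
    + by move: zW; rewrite E yW.
    + by move: za; rewrite E eqxx.
    + by move: nc; rewrite h'.
  - rewrite hCF'; apply: (conn_trans (y := a)).
      by rewrite connS; apply: conn_edge; rewrite setU11.
    by apply: conn_mono cc; apply: subsetUr.
rewrite -(Psi_pendant eF (a := a) (z := z)) -?WE //.
apply: le_trans IH' _; rewrite lerDr.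
exact: (Psi_ge0 _ (leqnn _)).
Qed.

End Ear.

Section Graph.
Variable V : finType.
Variable er : rel V.
Hypothesis sg : simple_graph er.
Hypothesis tc : two_connected er.
Implicit Types (A B C F K P : {set {set V}}).
Local Notation E := (edges er).

Lemma edgeP f : f \in E -> exists x y, [/\ er x y, x != y & f = [set x; y]].
Proof.
case/imsetP => -[x y]; rewrite inE /= => exy ->; exists x, y; split => //.
by apply: contraTneq exy => ->; rewrite sg.1.
Qed.

Lemma edge_in x y : er x y -> [set x; y] \in E.
Proof. by move=> exy; apply/imsetP; exists (x, y); rewrite ?inE. Qed.

Lemma pairsE K : K \subset E -> pairs K.
Proof. by move=> KE f /(subsetP KE) /edgeP[x [y [_ _ ->]]]; exists x, y. Qed.

Lemma cross (r : rel V) (W : {set V}) x z : connect r x z -> x \in W -> z \notin W ->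
  exists a b, [/\ a \in W, b \notin W & r a b].
Proof.
case/connectP => p; elim: p x => [|c p IH] x /=; first by move=> _ -> ->.
case/andP => rxc pp zl xW zW.
case cW: (c \in W); first exact: IH pp zl cW zW.
by exists x, c; rewrite cW.
Qed.

Section Tail.
Variable a : V.
Let ra := fun c d => [&& c != a, d != a & er c d].

Lemma path_tail (W0 : {set V}) p : forall (W : {set V}) b, path ra b p -> uniq (b :: p) ->
  (forall w, w \in p -> w \in W -> w \in W0) -> W0 \subset W ->
  last b p \in W0 -> b \notin W0 ->
  exists y P, [/\ tail a W b y P, y \in W0 & P \subset E].
Proof.
elim: p => [|w p IH] W b; first by move=> _ _ _ _ /= ->.
move=> /andP[rbw pp] /andP[bp up] hW W0W lW bW0.
case/and3P: rbw => ba wa ebw.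
have bw : b != w by apply: contraNneq bp => ->; rewrite inE eqxx.
case wW: (w \in W).
  exists w, [set [set b; w]]; split.
  - by apply: tail1.
  - by apply: hW; rewrite ?inE ?eqxx.
  - by rewrite sub1set edge_in.
have h1 : forall w', w' \in p -> w' \in w |: W -> w' \in W0.
  move=> w' w'p; rewrite in_setU1 => /orP[/eqP E'|w'W].
    by move: up; rewrite /= -E' w'p.
  by apply: hW; rewrite // inE w'p orbT.
have h2 : W0 \subset w |: W by apply: subset_trans W0W _; apply: subsetUr.
have h4 : w \notin W0 by apply: contraFN wW; apply: (subsetP W0W).
have [y [P [tl yW0 PE]]] := IH (w |: W) w pp up h1 h2 lW h4.
exists y, ([set b; w] |: P); split => //.
  by apply: tailS; rewrite ?wW // ?(subsetP W0W) // eq_sym.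
by rewrite subUset sub1set edge_in.
Qed.
End Tail.


Section Main.
Variables u v : V.
Hypothesis euv : er u v.
Local Notation ee := (ee u v).
Local Notation Psi := (Psi u v).
Local Notation Phi := (Phi u v).

Lemma uv_neq : u != v.
Proof. by apply: contraTneq euv => ->; rewrite sg.1. Qed.

Lemma tail_exists K : ee \in K -> K \subset E -> K != E ->
  exists a y P, [/\ tail a (cover K) a y P, a \in cover K, P \subset E & ~~ (P \subset K)].
Proof.
move=> eK KE KnE.
have [f fE fK] : exists2 f, f \in E & f \notin K.
  apply/exists_inP; move: KnE; apply: contraNT; rewrite negb_exists_in => /forall_inP H.
  by rewrite eqEsubset KE; apply/subsetP => f fE; apply/negPn; apply: H.
have uK : u \in cover K by apply/bigcupP; exists ee => //; apply: set21.
have vK : v \in cover K by apply/bigcupP; exists ee => //; apply: set22.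
case: (boolP [exists g in E :\: K, g \subset cover K]).
  case/exists_inP => g; rewrite inE => /andP[gK gE] gW.
  have [x [y [exy xy gxy]]] := edgeP gE.
  have xW : x \in cover K by rewrite (subsetP gW) // gxy set21.
  have yW : y \in cover K by rewrite (subsetP gW) // gxy set22.
  exists x, y, [set g]; split => //.
  - by rewrite gxy; apply: tail1; rewrite // eq_sym.
  - by rewrite sub1set.
  - by rewrite sub1set.
rewrite negb_exists_in => /forall_inP noA.
have := noA f; rewrite inE fK fE => /(_ isT) /subsetPn[z0 z0f z0W].
have [_ tc2 tc3] := tc.
have [a [z [aW zW eaz]]] := cross (tc2 u z0) uK z0W.
set y0 := if u != a then u else v.
have y0W : y0 \in cover K by rewrite /y0; case: ifP.
have y0a : y0 != a.
  rewrite /y0; case: ifP => // /negbFE /eqP <-; rewrite eq_sym; exact: uv_neq.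
have za : z != a by apply: contraNneq zW => ->.
have := tc3 a z y0 za y0a; case/connectP => p pp y0E.
case: (shortenP pp) y0E => p' pp' up' _ y0E.
have h1 : forall w, w \in p' -> w \in z |: cover K -> w \in cover K.
  move=> w wp; rewrite in_setU1 => /orP[/eqP E'|//].
  by move: up'; rewrite /= -E' wp.
have h2 : cover K \subset z |: cover K by apply: subsetUr.
have lW : last z p' \in cover K by rewrite -y0E.
have [y [P [tl yW PE]]] := path_tail pp' up' h1 h2 lW zW.
exists a, y, ([set a; z] |: P); split => //.
- by apply: tailS.
- by rewrite subUset sub1set edge_in.
- rewrite subUset sub1set negb_and; apply/orP; left; apply/negP => azK.
  by case/negP: zW; apply/bigcupP; exists [set a; z] => //; apply: set22.
Qed.

Lemma cover_setU K P x : (x \in cover (K :|: P)) = (x \in cover K) || (x \in cover P).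
Proof.
apply/bigcupP/orP => [[f] /[!inE] /orP[fK xf|fP xf]|[/bigcupP[f fK xf]|/bigcupP[f fP xf]]].
- by left; apply/bigcupP; exists f.
- by right; apply/bigcupP; exists f.
- by exists f; rewrite // inE fK.
- by exists f; rewrite // inE fP orbT.
Qed.

Lemma Psi_E_pos : 1 <= Psi set0 E.
Proof.
suff H : forall n K, (#|E :\: K| <= n)%N -> ee \in K -> K \subset E ->
    (forall x y, x \in cover K -> y \in cover K -> conn K x y) ->
    1 <= Psi set0 K -> 1 <= Psi set0 E.
  apply: (H _ [set ee] (leqnn _)).
  - by rewrite set11.
  - by rewrite sub1set edge_in.
  - move=> x y; rewrite cover1 => /set2P[->|->] /set2P[->|->];
      rewrite ?/conn ?connect0 //; apply: conn_edge; rewrite inE //.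
    by rewrite /ee setUC.
  - by rewrite Psi_single // conn0 uv_neq.
elim=> [|n IH] K cK eK KE cov pos.
  have -> : E = K.
    apply/eqP; rewrite eqEsubset KE andbT; apply/subsetP => f fE.
    apply/negPn/negP => fK; move: cK; rewrite leqn0 cards_eq0 => /eqP E0.
    have : f \in E :\: K by rewrite inE fK fE.
    by rewrite E0 inE.
  done.
case: (K =P E) => [<-|/eqP KnE] //.
have [a [y [P [tl aK PE PK]]]] := tail_exists eK KE KnE.
have /andP[yK ya] := tail_y tl.
have [cP cPw] := tail_conn tl.
apply: (IH (K :|: P)).
- have [f fP fK] : exists2 f, f \in P & f \notin K.
    by apply/exists_inP; move: PK; apply: contraNT; rewrite negb_exists_in => /forall_inP H;
      apply/subsetP => f /H /negPn.
  have fE : f \in E by apply: (subsetP PE).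
  have sub : E :\: (K :|: P) \proper E :\: K.
    rewrite properE; apply/andP; split.
      by apply: setDS; apply: subsetUl.
    apply/subsetPn; exists f; first by rewrite inE fK fE.
    by rewrite inE inE fP orbT.
  by rewrite -ltnS; apply: leq_trans (proper_card sub) cK.
- by rewrite inE eK.
- by rewrite subUset KE PE.
- have ca x : x \in cover (K :|: P) -> conn (K :|: P) a x.
    rewrite cover_setU => /orP[xK|xP].
      by apply: conn_mono (cov _ _ aK xK); apply: subsetUl.
    by apply: conn_mono (cPw _ xP); apply: subsetUr.
  move=> x y' /ca xa /ca ya'.
  by rewrite connS in xa; apply: conn_trans xa ya'.
- apply: le_trans pos _.
  apply: (Psi_ear tl (C := set0) (F := K)).
  + by rewrite set0U.
  + exact: aK.
  + exact: eK.
  + exact: pairsE.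
  + by rewrite conn0 eq_sym.
  + by rewrite set0U; apply: cov.
Qed.

Lemma S_Phi : \sum_(A : {set {set V}} | A \subset E) (-1) ^+ #|A| * (ncomp A)%:R = Phi set0 E :> int.
Proof.
have eE : ee \in E by apply: edge_in.
rewrite (sum_split _ eE) /Phi; apply: eq_bigr => A AS.
have eA : ee \notin A by move: AS; rewrite subsetD1 => /andP[].
rewrite cardsU1 eA add1n exprS setU0 (ncomp_add A u v) natrD mulrDr.
by rewrite mulN1r mulNr addrAC addrN add0r.
Qed.

Lemma S_neq0 : \sum_(A : {set {set V}} | A \subset E) (-1) ^+ #|A| * (ncomp A)%:R != 0 :> int.
Proof.
rewrite S_Phi; apply/eqP => P0; have := Psi_E_pos.
by rewrite /Psi P0 mulr0.
Qed.

End Main.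

End Graph.

Section Alg.
Variable CC : numClosedFieldType.
Variable V : finType.
Variable E : {set {set V}}.
Variable c : CC.
Hypothesis kE : ncomp E = 1%N.
Hypothesis m1 : (0 < #|E|)%N.
Hypothesis S0 : \sum_(A : {set {set V}} | A \subset E) (-1) ^+ #|A| * (ncomp A)%:R != 0 :> int.

Definition Zg : {poly {poly CC}} :=
  \sum_(A : {set {set V}} | A \subset E) 'X ^+ ncomp A * (('X - c%:P)%:P) ^+ #|A|.

Let m := #|E|.

Lemma swapZg : swapXY Zg =
  \sum_(A : {set {set V}} | A \subset E) ('X ^+ ncomp A)%:P * ('X - (c%:P)%:P) ^+ #|A|.
Proof.
rewrite /Zg rmorph_sum; apply: eq_bigr => A _.
by rewrite rmorphM !rmorphXn /= swapXY_X swapXY_polyC map_polyXsubC /= -rmorphXn.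
Qed.

Lemma size_T (A : {set {set V}}) : size (('X ^+ ncomp A)%:P * ('X - (c%:P)%:P) ^+ #|A| : {poly {poly CC}}) = #|A|.+1.
Proof. by rewrite size_Cmul ?size_exp_XsubC // expf_neq0 // polyX_eq0. Qed.

Lemma size_lead_swapZg : size (swapXY Zg) = m.+1 /\ lead_coef (swapXY Zg) = 'X.
Proof.
rewrite swapZg (bigD1 E) //=.
set T := _ * _; set R := \sum_(_ | _) _.
have sT : size T = m.+1 by rewrite size_T.
have sR : (size R <= m)%N.
  apply: leq_trans (size_sum _ _ _) _; apply/bigmax_leqP => A /andP[AE AnE].
  rewrite size_T; apply: proper_card; by rewrite properEneq AnE.
have lt : (size R < size T)%N by rewrite sT ltnS.
split; first by rewrite size_addl.
rewrite lead_coefDl // /T lead_coefM lead_coefC lead_coef_exp lead_coefXsubC.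
by rewrite expr1n mulr1 kE expr1.
Qed.

Lemma term_eval (k n : nat) :
  (((('X ^+ k * (('X - c%:P)%:P) ^+ n : {poly {poly CC}})^`()).[1%:P]).[c - 1]) =
  ((-1) ^+ n * k%:R : int)%:~R.
Proof.
rewrite derivM -rmorphXn derivC mulr0 addr0 derivXn /=.
rewrite hornerM hornerMn hornerXn expr1n hornerC.
rewrite hornerM hornerMn hornerC horner_exp hornerXsubC.
have -> : c - 1 - c = -1 by ring.
by rewrite rmorphM /= rmorphXn rmorphN1 rmorph_nat mulrC.
Qed.


Lemma Zg_irr Zt : Zg = 'X * Zt -> irreducible_elt Zt.
Proof.
move=> ZE.
have [sZ lZ] := size_lead_swapZg.
have sZE : swapXY Zg = ('X)%:P * swapXY Zt by rewrite ZE rmorphM /= swapXY_X.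
have sZt : size (swapXY Zt) = m.+1 by rewrite -sZ sZE size_Cmul ?polyX_eq0.
have lZt : lead_coef (swapXY Zt) = 1.
  apply: (@mulfI _ 'X); first by rewrite polyX_eq0.
  by rewrite mulr1 -[in RHS]lZ sZE lead_coefM lead_coefC.
have Zt0 : Zt != 0 by rewrite -swapXY_eq0 -size_poly_eq0 sZt.
have Zt1 : Zt.[1%:P] = ('X - c%:P + 1) ^+ m.
  have : Zg.[1%:P] = Zt.[1%:P] by rewrite ZE hornerM hornerX mul1r.
  move <-; rewrite /Zg horner_sum -sum_binom; apply: eq_bigr => A _.
  by rewrite hornerM hornerXn expr1n mul1r -rmorphXn hornerC.
have key : forall x y, Zt = x * y -> x \is a GRing.unit \/ (x.[1%:P]).[c - 1] = 0.
  move=> x y Exy.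
  have sxy : swapXY x * swapXY y = swapXY Zt by rewrite Exy rmorphM.
  have lxy : lead_coef (swapXY x) * lead_coef (swapXY y) = 1.
    by rewrite -lead_coefM sxy lZt.
  have lu : lead_coef (swapXY x) \is a GRing.unit.
    by apply/unitrPr; exists (lead_coef (swapXY y)).
  move: lu; rewrite poly_unitE => /andP[/size_poly1P[l0 l00 l0E] _].
  have x0 : swapXY x != 0.
    by rewrite swapXY_eq0; apply: contraNneq Zt0 => x0; rewrite Exy x0 mul0r.
  case: (leqP (size (swapXY x)) 1) => sx.
    left; have -> : x = swapXY (swapXY x) by rewrite swapXYK.
    have s1 : size (swapXY x) = 1%N.
      by apply/eqP; rewrite eqn_leq sx lt0n size_poly_eq0.
    rewrite (size1_polyC sx).
    have -> : (swapXY x)`_0 = l0%:P by rewrite -l0E lead_coefE s1.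
    rewrite swapXY_polyC map_polyC /=.
    by apply: rmorph_unit; apply: rmorph_unit; rewrite unitfE.
  right.
  have Ex : x.[1%:P] = map_poly (horner_eval 1) (swapXY x) := horner_polyC x 1.
  have sEx : size x.[1%:P] = size (swapXY x).
    by rewrite Ex size_map_poly_id0 // l0E /horner_eval hornerC.
  have [z rz] : exists z, root x.[1%:P] z.
    by apply/closed_rootP; rewrite sEx neq_ltn sx orbT.
  have : (Zt.[1%:P]).[z] = 0.
    by rewrite Exy hornerM hornerM (rootP rz) mul0r.
  rewrite Zt1 horner_exp hornerD hornerXsubC hornerC.
  move/eqP; rewrite expf_eq0 => /andP[_ /eqP h].
  have zE : z = c - 1.
    have -> : z = (z - c + 1) + (c - 1) by ring.
    by rewrite h add0r.
  by move/eqP: rz; rewrite zE.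
split; first exact: Zt0.
  apply/negP => /unitrPr[w Zw].
  have sw : swapXY Zt * swapXY w = 1 by rewrite -rmorphM Zw rmorph1.
  have w0 : swapXY w != 0 by apply: contra_eq_neq sw => ->; rewrite mulr0 eq_sym oner_neq0.
  have Zs0 : swapXY Zt != 0 by rewrite -size_poly_eq0 sZt.
  move: (congr1 (fun p : {poly {poly CC}} => size p) sw) => /=; rewrite size_mul // size_poly1 sZt addSn /=.
  move: w0; rewrite -size_poly_eq0; case: (size (swapXY w)) => // k _.
  by rewrite addnS => -[] /eqP; rewrite addn_eq0 => /andP[/eqP m0 _]; move: m1; rewrite -/m m0.
move=> a b Eab.
case: (key a b Eab) => [->|ha]; first by left.
case: (key b a _) => [|->|hb]; [by rewrite mulrC | by right |].
exfalso.
pose ev := fun p : {poly {poly CC}} => (p.[1%:P]).[c - 1].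
have evM p q : ev (p * q) = ev p * ev q by rewrite /ev !hornerM.
have evD p q : ev (p + q) = ev p + ev q by rewrite /ev !hornerD.
have e1 : ev Zt = 0 by rewrite Eab evM /ev ha mul0r.
have e2 : ev (Zt^`()) = 0.
  by rewrite Eab derivM evD !evM /ev ha hb mulr0 mul0r addr0.
have e3 : ev (Zg^`()) = 0.
  by rewrite ZE derivM derivX mul1r evD evM e1 e2 mulr0 addr0.
move: e3; rewrite /ev /Zg linear_sum /= !horner_sum.
under eq_bigr => A _ do rewrite term_eval.
rewrite -rmorph_sum => /eqP; rewrite intr_eq0 => /eqP S00.
by move: S0; rewrite S00 eqxx.
Qed.

End Alg.

Section Final.
Variable V : finType.
Variable er : rel V.
Hypothesis sg : simple_graph er.
Hypothesis tc : two_connected er.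

Lemma exists_edge : exists u v, er u v.
Proof.
have [c3 tc2 _] := tc.
have : (0 < #|V|)%N by apply: leq_trans c3.
case/card_gt0P => x0 _.
have [y0 y0x] : exists y0, y0 \in [set~ x0].
  apply/set0Pn; rewrite -cards_eq0 cardsC1; move: c3.
  by case: #|V| => [|[|[|n]]].
have y0x' : y0 \notin [set x0] by rewrite -in_setC.
have [a [b [aW bW eab]]] := cross (tc2 x0 y0) (set11 x0) y0x'.
by exists a, b.
Qed.

Lemma ncomp_edges : ncomp (edges er) = 1%N.
Proof.
have [c3 tc2 _] := tc.
have [u [v euv]] := exists_edge.
rewrite /ncomp (@eq_n_comp_r _ _ _ (connect (sub_rel (edges er)) u)).
  by apply: n_comp_connect; apply: conn_sym.
move=> y; rewrite !inE; apply/esym.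
apply: connect_sub (tc2 u y) => c d ecd; apply: connect1.
exact: edge_in.
Qed.

End Final.

Unset Implicit Arguments.

Theorem proposition5p1 (R : realType) (V : finType) (e : rel V) :
  simple_graph e -> two_connected e ->
  (forall Zt : {poly {poly R[i]}}, Zpotts R e = 'X * Zt -> irreducible_elt Zt) /\
  (forall Zt : {poly {poly R[i]}}, Zpotts_y R e = 'X * Zt -> irreducible_elt Zt).
Proof.
move=> sg tc.
have [u [v euv]] := exists_edge tc.
have kE := ncomp_edges tc.
have m1 : (0 < #|edges e|)%N by apply/card_gt0P; exists [set u; v]; apply: edge_in.
have S0 := S_neq0 sg tc euv.
split => Zt H.
  apply: (Zg_irr (c := 0) kE m1 S0); rewrite -H /Zpotts /Zg.
  by apply: eq_bigr => A _; rewrite subr0.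
apply: (Zg_irr (c := 1) kE m1 S0); rewrite -H /Zpotts_y /Zg.
by apply: eq_bigr => A _; rewrite rmorphB /= polyC1.
Qed.
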